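(* Consider the problem $\min_{w\in W}f(w)$, $f(w)=\mu(w)+\sum_{s\in N}\eta_s(w_{(s)})$, under the assumptions of the context, and additionally assume that the gradient $\mu'$ is uniformly continuous on $W$. Let Method (CPL) (described in the context) be applied with any $z^0\in W$, $\beta,\theta\in(0,1)$ and any sequence $\delta_l>0$ decreasing to $0$. Then: (i) for each outer iteration $l$, the number of inner iterations performed before the restart producing $z^l$ is finite; (ii) the sequence $\{z^l\}$ has limit points, every limit point of $\{z^l\}$ is a solution of $\min_{w\in W}f(w)$, and $\lim_{l\to\infty}f(z^l)=f^*$, where $f^*=\min_{w\in W}f(w)$.
   Context: Let $N=\{1,\dots,n\}$ and $\mathbb{R}^m=\prod_{s\in N}\mathbb{R}^{m_s}$, writing $w=(w_{(s)})_{s\in N}$. Let $W=\prod_{s\in N}W_s$ where each $W_s\subset\mathbb{R}^{m_s}$ is nonempty, convex and compact. Let $\mu:\mathbb{R}^m\to\mathbb{R}$ be convex and continuously differentiable, and each $\eta_s:\mathbb{R}^{m_s}\to\mathbb{R}$ convex; $\eta(w)=\sum_s\eta_s(w_{(s)})$, $f=\mu+\eta$. For $w\in W$ and $s\in N$ define $V_s(w)$ as the solution set of $\min_{v_{(s)}\in W_s}\{\langle v_{(s)},\partial\mu(w)/\partial w_{(s)}\rangle+\eta_s(v_{(s)})\}$ and the partial gap $$\varphi_s(w)=\max_{v_{(s)}\in W_s}\Big\{\Big\langle w_{(s)}-v_{(s)},\frac{\partial\mu(w)}{\partial w_{(s)}}\Big\rangle+\eta_s(w_{(s)})-\eta_s(v_{(s)})\Big\}.$$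 Method (CPL): Choose $z^0\in W$, $\beta,\theta\in(0,1)$, a sequence $\delta_l\searrow 0$; set $l=1$. Step 0: set $k=0$, $d=0$, $s=1$, $w^0=z^{l-1}$. Step 1: find $v_{(s)}\in V_s(w^k)$ and compute $\varphi_s(w^k)$. If $\varphi_s(w^k)\ge\delta_l$, define $p^k$ by $p^k_{(s)}=v_{(s)}-w^k_{(s)}$ and $p^k_{(i)}=0$ for $i\ne s$, and go to Step 4. Step 2: set $d=d+1$. If $d=n$ (i.e. $n$ consecutive components have been checked with gap below $\delta_l$), set $z^l=w^k$, $l=l+1$ and go to Step 0 (restart). Step 3: set $s=1$ if $s=n$, else $s=s+1$; go to Step 1. Step 4: let $j$ be the smallest nonnegative integer with $f(w^k+\theta^jp^k)\le f(w^k)-\beta\theta^j\varphi_s(w^k)$; set $\lambda_k=\theta^j$, $w^{k+1}=w^k+\lambda_kp^k$, $k=k+1$, $d=0$; set $s=1$ if $s=n$, else $s=s+1$; go to Step 1. *)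

(* Defs.v *)
(* Conventions: N = {1,...,n} is represented by 'I_n (block 1 is
   the ordinal 0); R^{m_s} is 'I_(m s) -> R; R^m = prod_s R^{m_s} is the dependent
   function type  forall s : 'I_n, 'I_(m s) -> R. *)
From Stdlib Require Import Reals.
From mathcomp Require Import ssreflect ssrfun ssrbool eqtype ssrnat seq fintype bigop.
Set Implicit Arguments. Unset Strict Implicit. Unset Printing Implicit Defensive.
Local Open Scope R_scope.

Definition bvec (k : nat) := 'I_k -> R.
Definition bdot (k : nat) (x y : bvec k) : R := \big[Rplus/R0]_(j < k) (x j * y j).
Definition bnorm (k : nat) (x : bvec k) : R := sqrt (bdot x x).

Definition bconvex_set (k : nat) (A : bvec k -> Prop) : Prop :=
  forall x y t, A x -> A y -> 0 <= t <= 1 -> A (fun j => t * x j + (1 - t) * y j).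

Definition bcompact (k : nat) (A : bvec k -> Prop) : Prop :=
  forall u : nat -> bvec k, (forall i, A (u i)) ->
  exists (phi : nat -> nat) (x : bvec k),
    (forall i, (phi i < phi i.+1)%N) /\ A x /\
    (forall eps, 0 < eps -> exists N, forall i, (N <= i)%N ->
        bnorm (fun j => u (phi i) j - x j) < eps).

Definition bconvex_fun (k : nat) (F : bvec k -> R) : Prop :=
  forall x y t, 0 <= t <= 1 ->
    F (fun j => t * x j + (1 - t) * y j) <= t * F x + (1 - t) * F y.

Definition vec (n : nat) (m : 'I_n -> nat) := forall s : 'I_n, bvec (m s).
Arguments vec : clear implicits.
Definition vdot n m (x y : vec n m) : R := \big[Rplus/R0]_(s < n) bdot (x s) (y s).
Definition vnorm n m (x : vec n m) : R := sqrt (vdot x x).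
Definition vdiff n m (x y : vec n m) : vec n m := fun s j => x s j - y s j.

Definition vconvex_fun n m (F : vec n m -> R) : Prop :=
  forall (x y : vec n m) t, 0 <= t <= 1 ->
    F (fun s j => t * x s j + (1 - t) * y s j) <= t * F x + (1 - t) * F y.

Definition has_gradient n m (mu : vec n m -> R) (g : vec n m -> vec n m) : Prop :=
  forall x : vec n m, forall eps, 0 < eps -> exists delta, 0 < delta /\
    forall h : vec n m, vnorm h < delta ->
      Rabs (mu (fun s j => x s j + h s j) - mu x - vdot (g x) h) <= eps * vnorm h.

Definition vcontinuous n m (g : vec n m -> vec n m) : Prop :=
  forall x : vec n m, forall eps, 0 < eps -> exists delta, 0 < delta /\
    forall y, vnorm (vdiff y x) < delta -> vnorm (vdiff (g y) (g x)) < eps.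

Definition vunif_cont_on n m (A : vec n m -> Prop) (g : vec n m -> vec n m) : Prop :=
  forall eps, 0 < eps -> exists delta, 0 < delta /\
    forall x y, A x -> A y -> vnorm (vdiff y x) < delta -> vnorm (vdiff (g y) (g x)) < eps.

Definition inW n m (W : forall s : 'I_n, bvec (m s) -> Prop) (w : vec n m) : Prop :=
  forall s, W s (w s).

Definition fobj n m (mu : vec n m -> R) (eta : forall s : 'I_n, bvec (m s) -> R)
  (w : vec n m) : R := mu w + \big[Rplus/R0]_(s < n) eta s (w s).

Definition is_max (T : Type) (A : T -> Prop) (F : T -> R) (M : R) : Prop :=
  (exists v, A v /\ F v = M) /\ (forall v, A v -> F v <= M).
Definition is_min (T : Type) (A : T -> Prop) (F : T -> R) (M : R) : Prop :=
  (exists v, A v /\ F v = M) /\ (forall v, A v -> M <= F v).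

(* the function maximized in the partial gap phi_s(w); g w s = d mu(w) / d w_(s) *)
Definition gapfun n m (g : vec n m -> vec n m) (eta : forall s : 'I_n, bvec (m s) -> R)
  (w : vec n m) (s : 'I_n) (v : bvec (m s)) : R :=
  bdot (fun j => w s j - v j) (g w s) + eta s (w s) - eta s v.
Arguments gapfun {n m} g eta w s v.

Definition in_V n m (W : forall s : 'I_n, bvec (m s) -> Prop) (g : vec n m -> vec n m)
  (eta : forall s : 'I_n, bvec (m s) -> R) (w : vec n m) (s : 'I_n) (v : bvec (m s)) : Prop :=
  W s v /\ forall u, W s u -> bdot v (g w s) + eta s v <= bdot u (g w s) + eta s u.
Arguments in_V {n m} W g eta w s v.

(* One transition of method (CPL) between states (w^k, s, d, l) and (w', s', d', l').
   First alternative: Step 1 with phi_s(w^k) >= delta_l, followed by Step 4.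
   Second alternative: Step 1 with phi_s(w^k) < delta_l, followed by Step 2 and either
   a restart (Step 0 of outer iteration l+1, z^l = w^k, w^0 = z^l) or Step 3.
   Block s = 1 is the ordinal 0 (Ordinal hn); "s := 1 if s = n else s+1" is ordS. *)
Definition cpl_step n (hn : (0 < n)%N) (m : 'I_n -> nat)
  (W : forall s : 'I_n, bvec (m s) -> Prop) (mu : vec n m -> R) (g : vec n m -> vec n m)
  (eta : forall s : 'I_n, bvec (m s) -> R) (beta theta : R) (delta : nat -> R)
  (w : vec n m) (s : 'I_n) (d l : nat)
  (w' : vec n m) (s' : 'I_n) (d' l' : nat) : Prop :=
  let f := fobj mu eta in
  (exists (v : bvec (m s)) (phi : R) (p : vec n m) (j : nat),
      in_V W g eta w s v /\
      is_max (W s) (gapfun g eta w s) phi /\ delta l <= phi /\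
      p s = (fun i => v i - w s i) /\ (forall i, i <> s -> p i = (fun _ => 0)) /\
      f (fun i k => w i k + theta ^ j * p i k) <= f w - beta * theta ^ j * phi /\
      (forall j', (j' < j)%N ->
         f w - beta * theta ^ j' * phi < f (fun i k => w i k + theta ^ j' * p i k)) /\
      w' = (fun i k => w i k + theta ^ j * p i k) /\
      s' = ordS s /\ d' = 0%N /\ l' = l)
  \/
  (exists phi : R,
      is_max (W s) (gapfun g eta w s) phi /\ phi < delta l /\
      ((d.+1 = n /\ w' = w /\ s' = Ordinal hn /\ d' = 0%N /\ l' = l.+1) \/
       (d.+1 <> n /\ w' = w /\ s' = ordS s /\ d' = d.+1 /\ l' = l))).

Definition cluster_point n m (z : nat -> vec n m) (zb : vec n m) : Prop :=
  forall eps, 0 < eps -> forall N, exists k, (N <= k)%N /\ vnorm (vdiff (z k) zb) < eps.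

(* Main.v *)
Require Import Defs.
From Stdlib Require Import Reals Lra Lia Psatz ClassicalEpsilon FunctionalExtensionality Classical Wf_nat.
From HB Require Import structures.
From mathcomp Require Import ssreflect ssrfun ssrbool eqtype ssrnat seq fintype bigop div.
Local Open Scope R_scope.


HB.instance Definition _ := Monoid.isComLaw.Build R R0 Rplus (fun a b c => esym (Rplus_assoc a b c)) Rplus_comm Rplus_0_l.

Lemma sumR_le (N : nat) (F G : 'I_N -> R) : (forall i, F i <= G i) ->
  \big[Rplus/R0]_(i < N) F i <= \big[Rplus/R0]_(i < N) G i.
Proof. move=> H; apply: (big_ind2 (fun a b => a <= b)) => //; [lra| move=> *; lra]. Qed.

Lemma sumR_split (N : nat) (F G : 'I_N -> R) :
  \big[Rplus/R0]_(i < N) (F i + G i) = \big[Rplus/R0]_(i < N) F i + \big[Rplus/R0]_(i < N) G i.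
Proof. by rewrite big_split. Qed.

Lemma sumR_scale (N : nat) (c : R) (F : 'I_N -> R) :
  \big[Rplus/R0]_(i < N) (c * F i) = c * \big[Rplus/R0]_(i < N) F i.
Proof. apply: (big_rec2 (fun a b => a = c * b)); [lra| move=> i a b _ ->; ring]. Qed.

Lemma sumR_ge0 (N : nat) (F : 'I_N -> R) : (forall i, 0 <= F i) -> 0 <= \big[Rplus/R0]_(i < N) F i.
Proof. move=> H; apply: (big_ind (fun a => 0 <= a)) => //; [lra| move=> *; lra]. Qed.

Lemma sumR_ge_term (N : nat) (F : 'I_N -> R) (i : 'I_N) : (forall j, 0 <= F j) ->
  F i <= \big[Rplus/R0]_(j < N) F j.
Proof.
move=> H; rewrite (bigD1 i) //=.
rewrite -{1}[F i]Rplus_0_r; apply: Rplus_le_compat_l.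
apply: (big_ind (fun a => 0 <= a)) => //; [lra| move=> *; lra].
Qed.

Lemma sumR_single (N : nat) (F : 'I_N -> R) (i : 'I_N) : (forall j, j <> i -> F j = 0) ->
  \big[Rplus/R0]_(j < N) F j = F i.
Proof.
move=> H; rewrite (bigD1 i) //= big1 ?Rplus_0_r // => j /eqP; apply: H.
Qed.

Lemma sumR_bound (N : nat) (F : 'I_N -> R) (c : R) : (forall i, F i <= c) ->
  \big[Rplus/R0]_(i < N) F i <= INR N * c.
Proof.
move=> H. apply: Rle_trans (@sumR_le N F (fun _ => c) H) _.
rewrite big_const_ord. right. elim: N {F H} => [|N IH] /=; first ring.
rewrite IH; destruct N; simpl; ring.
Qed.

Definition bnsq k (x : bvec k) := bdot x x.
Definition vnsq n m (x : vec n m) := vdot x x.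

Lemma bdot_ge0 k (x : bvec k) : 0 <= bdot x x.
Proof. apply: sumR_ge0 => j; apply: Rle_0_sqr. Qed.

Lemma vdot_ge0 n m (x : vec n m) : 0 <= vdot x x.
Proof. apply: sumR_ge0 => j; apply: bdot_ge0. Qed.

Lemma bdot_sym k (x y : bvec k) : bdot x y = bdot y x.
Proof. apply: eq_bigr => j _; ring. Qed.

Lemma vdot_sym n m (x y : vec n m) : vdot x y = vdot y x.
Proof. apply: eq_bigr => j _; apply: bdot_sym. Qed.

Lemma bdot_cs k (x y : bvec k) l : 0 < l -> bdot x y <= (l * bdot x x + bdot y y / l) / 2.
Proof.
move=> hl. rewrite /bdot.
apply: Rle_trans (_ : _ <= \big[Rplus/R0]_(j < k) (/ 2 * (l * (x j * x j)) + /2 * / l * (y j * y j))) _.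
  apply: sumR_le => j.
  have : 0 <= (l * x j - y j)^2 by apply: pow2_ge_0.
  move=> h. apply (Rmult_le_reg_l (2 * l)); first lra.
  field_simplify; [|lra]. nra.
right. rewrite sumR_split !sumR_scale /Rdiv. ring.
Qed.

Lemma vdot_cs n m (x y : vec n m) l : 0 < l -> vdot x y <= (l * vdot x x + vdot y y / l) / 2.
Proof.
move=> hl. rewrite /vdot.
apply: Rle_trans (_ : _ <= \big[Rplus/R0]_(s < n) ((l * bdot (x s) (x s) + bdot (y s) (y s) / l) / 2)) _.
  by apply: sumR_le => s; apply: bdot_cs hl.
right. rewrite /Rdiv.
rewrite (eq_bigr (fun s => / 2 * (l * bdot (x s) (x s)) + /2 * / l * bdot (y s) (y s))); last by move=> *; ring.
rewrite sumR_split !sumR_scale. ring.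
Qed.

Lemma coord_le k (x : bvec k) j : x j * x j <= bdot x x.
Proof. apply: (@sumR_ge_term k (fun j => x j * x j)) => i; apply: Rle_0_sqr. Qed.

Lemma block_le n m (x : vec n m) s : bdot (x s) (x s) <= vdot x x.
Proof. apply: (@sumR_ge_term n (fun s => bdot (x s) (x s))) => i; apply: bdot_ge0. Qed.

Lemma sqrt_lt_sq a e : 0 <= a -> 0 < e -> (sqrt a < e <-> a < e * e).
Proof.
move=> ha he; split.
- move=> h. have := sqrt_sqrt a ha. have := sqrt_pos a. nra.
- move=> h. rewrite -(sqrt_square e); last lra. apply: sqrt_lt_1_alt; lra.
Qed.

Lemma vnorm_lt n m (x : vec n m) e : 0 < e -> (vnorm x < e <-> vdot x x < e * e).
Proof. move=> he; apply: sqrt_lt_sq => //; apply: vdot_ge0. Qed.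

Lemma bnorm_lt k (x : bvec k) e : 0 < e -> (bnorm x < e <-> bdot x x < e * e).
Proof. move=> he; apply: sqrt_lt_sq => //; apply: bdot_ge0. Qed.

Lemma bdot_lin k (x y z : bvec k) a b :
  bdot x (fun j => a * y j + b * z j) = a * bdot x y + b * bdot x z.
Proof.
rewrite /bdot -!sumR_scale -sumR_split. apply: eq_bigr => j _; ring.
Qed.

Lemma vdot_lin n m (x y z : vec n m) a b :
  vdot x (fun s j => a * y s j + b * z s j) = a * vdot x y + b * vdot x z.
Proof.
rewrite /vdot -!sumR_scale -sumR_split. apply: eq_bigr => s _; apply: bdot_lin.
Qed.

Lemma bdot_ext k (x y x' y' : bvec k) : (forall j, x j = x' j) -> (forall j, y j = y' j) ->
  bdot x y = bdot x' y'.
Proof. move=> h1 h2; apply: eq_bigr => j _; by rewrite h1 h2. Qed.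

Lemma vdot_ext n m (x y x' y' : vec n m) : (forall s j, x s j = x' s j) -> (forall s j, y s j = y' s j) ->
  vdot x y = vdot x' y'.
Proof. move=> h1 h2; apply: eq_bigr => s _; apply: bdot_ext; [apply: h1|apply: h2]. Qed.

Lemma vdot_scale n m (x y : vec n m) t : vdot x (fun s j => t * y s j) = t * vdot x y.
Proof.
rewrite (_ : vdot x (fun s j => t * y s j) = vdot x (fun s j => t * y s j + 0 * y s j)); last by apply: vdot_ext => *; ring.
rewrite vdot_lin; ring.
Qed.

Lemma vnorm_scale n m (x : vec n m) t : 0 <= t -> vnorm (fun s j => t * x s j) = t * vnorm x.
Proof.
move=> ht. rewrite /vnorm vdot_scale vdot_sym vdot_scale -Rmult_assoc sqrt_mult_alt.
  by rewrite sqrt_square.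
nra.
Qed.

Lemma Rabs_le_bt x a : Rabs x <= a -> - a <= x /\ x <= a.
Proof. move=> h; have := Rle_abs x; have := Rle_abs (-x); rewrite Rabs_Ropp; lra. Qed.

Lemma grad_ineq n m (mu : vec n m -> R) g : vconvex_fun mu -> has_gradient mu g ->
  forall x y, mu x + vdot (g x) (vdiff y x) <= mu y.
Proof.
move=> hc hg x y. set h := vdiff y x.
have hn := sqrt_pos (vdot h h).
suff H : forall eps, 0 < eps -> vdot (g x) h <= mu y - mu x + eps * (vnorm h + 1).
  suff : vdot (g x) h <= mu y - mu x by lra.
  apply: le_epsilon => e he.
  have := H (e / (vnorm h + 1)) (ltac:(apply: Rdiv_lt_0_compat; rewrite /vnorm; lra)).
  have -> : e / (vnorm h + 1) * (vnorm h + 1) = e by field; rewrite /vnorm; lra.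
  lra.
move=> eps he. have [del [hdel Hd]] := hg x eps he.
set t := Rmin 1 (del / (2 * (vnorm h + 1))).
have ht0 : 0 < t.
  apply: Rmin_pos; first lra. apply: Rdiv_lt_0_compat => //. rewrite /vnorm; lra.
have ht1 : t <= 1 by apply: Rmin_l.
have ht2 : t <= del / (2 * (vnorm h + 1)) by apply: Rmin_r.
have Hn : vnorm (fun s j => t * h s j) < del.
  rewrite vnorm_scale; last lra.
  apply: Rle_lt_trans (_ : _ <= del / (2 * (vnorm h + 1)) * vnorm h) _.
    apply: Rmult_le_compat_r => //.
  rewrite /vnorm in hn *. set q := del / (2 * (sqrt (vdot h h) + 1)).
  have hq : q * (2 * (sqrt (vdot h h) + 1)) = del by rewrite /q; field; lra.
  have hq0 : 0 < q by rewrite /q; apply: Rdiv_lt_0_compat; lra.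
  nra.
have := Hd _ Hn. rewrite vnorm_scale; last lra. rewrite vdot_scale => Habs.
have Hcv := hc y x t (conj (Rlt_le _ _ ht0) ht1).
have Heq : (fun s j => t * y s j + (1 - t) * x s j) = (fun s j => x s j + t * h s j).
  apply: functional_extensionality_dep => s; apply: functional_extensionality => j.
  rewrite /h /vdiff; ring.
rewrite Heq in Hcv.
have [Hl _] := Rabs_le_bt _ _ Habs.
have : t * vdot (g x) h <= t * (mu y - mu x + eps * (vnorm h + 1)).
  have : 0 <= vnorm h by apply: sqrt_pos.
  nra.
move=> H2; apply: Rmult_le_reg_l ht0 H2.
Qed.

Arguments bdot_ge0 {k}. Arguments vdot_ge0 {n m}. Arguments bdot_sym {k}. Arguments vdot_sym {n m}.
Arguments bdot_cs {k}. Arguments vdot_cs {n m}. Arguments coord_le {k}. Arguments block_le {n m}.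
Arguments vnorm_lt {n m}. Arguments bnorm_lt {k}. Arguments bdot_lin {k}. Arguments vdot_lin {n m}.
Arguments bdot_ext {k}. Arguments vdot_ext {n m}. Arguments vdot_scale {n m}. Arguments vnorm_scale {n m}.
Arguments grad_ineq {n m mu g}. Arguments Rabs_le_bt {x a}.


Lemma conv_app k (F : bvec k -> R) : bconvex_fun F -> forall a b c t, 0 <= t <= 1 ->
  (forall j, c j = t * a j + (1 - t) * b j) -> F c <= t * F a + (1 - t) * F b.
Proof.
move=> hF a b c t ht hc.
have -> : c = (fun j => t * a j + (1 - t) * b j) by apply: functional_extensionality.
exact: hF.
Qed.

Arguments conv_app {k F}.

Lemma F_ext k (F : bvec k -> R) (a b : bvec k) : (forall j, a j = b j) -> F a = F b.
Proof. move=> h; f_equal; apply: functional_extensionality => j; apply: h. Qed.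

Definition evec k (x : bvec k) (i : 'I_k) (t : R) : bvec k :=
  fun j => x j + (if j == i then t else 0).

Arguments evec {k}.

Lemma bound_1d k (F : bvec k -> R) : bconvex_fun F -> forall x i T t, 0 < T -> Rabs t <= T ->
  F (evec x i t) <= Rmax (F (evec x i T)) (F (evec x i (- T))).
Proof.
move=> hF x i T t hT ht.
have [ht1 ht2] := Rabs_le_bt ht.
set l := (T + t) / (2 * T).
have hl : 0 <= l <= 1.
  rewrite /l; split; [apply: Rmult_le_pos; [lra|left; apply: Rinv_0_lt_compat; lra]|].
  apply: (Rmult_le_reg_r (2 * T)); first lra. field_simplify; lra.
have H := conv_app hF (evec x i T) (evec x i (-T)) (evec x i t) _ hl.
have : F (evec x i t) <= l * F (evec x i T) + (1 - l) * F (evec x i (- T)).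
  apply: H => j. rewrite /evec. case: (j == i); rewrite /l; field; lra.
have := Rmax_l (F (evec x i T)) (F (evec x i (- T))).
have := Rmax_r (F (evec x i T)) (F (evec x i (- T))).
nra.
Qed.

Lemma box_bound k (F : bvec k -> R) : bconvex_fun F -> forall x : bvec k, (0 < k)%N ->
  exists M, forall h : bvec k, (forall j, Rabs (h j) <= 1) -> F (fun j => x j + h j) <= M.
Proof.
move=> hF x hk.
set T := INR k.
have hT : 0 < T by apply: lt_0_INR; apply/ltP.
set M := \big[Rplus/R0]_(i < k) (Rabs (F (evec x i T)) + Rabs (F (evec x i (-T)))).
have HM : forall i t, Rabs t <= T -> F (evec x i t) <= M.
  move=> i t ht. apply: Rle_trans (@bound_1d k F hF x i T t hT ht) _.
  apply: Rle_trans (_ : _ <= Rabs (F (evec x i T)) + Rabs (F (evec x i (-T)))) _.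
    have := Rle_abs (F (evec x i T)); have := Rle_abs (F (evec x i (-T))).
    have := Rabs_pos (F (evec x i T)); have := Rabs_pos (F (evec x i (-T))).
    move=> *; apply: Rmax_lub; lra.
  apply: (@sumR_ge_term k (fun i => Rabs (F (evec x i T)) + Rabs (F (evec x i (-T))))) => j.
  have := Rabs_pos (F (evec x j T)); have := Rabs_pos (F (evec x j (-T))). lra.
exists M => h hh.
set S := fun (i : nat) (j : 'I_k) => x j + (T / INR i) * (if (j < i)%N then h j else 0).
have HS : forall i, (1 <= i <= k)%N -> F (S i) <= M.
  elim => [|i IH] //. move=> /andP [_ hik].
  have hik' : (i < k)%N by [].
  set oi := Ordinal hik'.
  have Hq : F (evec x oi (T * h oi)) <= M.
    apply: HM. rewrite Rabs_mult Rabs_right; last lra.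
    have := hh oi. have := Rabs_pos (h oi). nra.
  case: (posnP i) => [i0|ipos].
  - have -> : S i.+1 = evec x oi (T * h oi); last exact: Hq.
    apply: functional_extensionality => j. rewrite /S /evec.
    have Hb : (j == oi) = (j < i.+1)%N.
      by rewrite -val_eqE /= i0 ltnS leqn0.
    have e1 : INR i.+1 = 1 by rewrite i0.
    rewrite e1 -Hb. case: eqP => [->|_] /=; field.
  - have IH' := IH (ltac:(apply/andP; split => //; exact: ltnW)).
    have hi : 0 < INR i by apply: lt_0_INR; apply/ltP.
    have ht : 0 <= INR i / INR i.+1 <= 1.
      rewrite S_INR; split; [apply: Rmult_le_pos; [lra|left; apply: Rinv_0_lt_compat; lra]|].
      apply: (Rmult_le_reg_r (INR i + 1)); first lra. field_simplify; lra.
    have := conv_app hF (S i) (evec x oi (T * h oi)) (S i.+1) _ ht.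
    move=> H. have : F (S i.+1) <= INR i / INR i.+1 * F (S i) + (1 - INR i / INR i.+1) * F (evec x oi (T * h oi)).
      apply: H => j. rewrite /S /evec S_INR.
      case: eqP => [->|hne].
      + rewrite /= ltnn ltnSn /=. field; lra.
      + have hne' : nat_of_ord j <> i by move=> e; apply: hne; apply: val_inj.
        case: (ltngtP j i) => hj.
        * have -> : (j < i.+1)%N = true by apply: ltnW. field; lra.
          have -> : (j < i.+1)%N = false by apply/negbTE; rewrite -leqNgt.
          field; lra.
        * by case: hne'.
    move=> H2. set t := INR i / INR i.+1 in H2 ht.
    have := Rmult_le_compat_l t _ _ (proj1 ht) IH'.
    have := Rmult_le_compat_l (1 - t) _ _ (ltac:(lra)) Hq. lra.
have := HS k (ltac:(apply/andP; split => //)).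
have -> : S k = (fun j => x j + h j); last done.
apply: functional_extensionality => j. rewrite /S (ltn_ord j) /T. field.
apply: not_0_INR => e; by rewrite e in hk.
Qed.

Arguments box_bound {k F}.
Arguments F_ext {k}.

Lemma convex_cont k (F : bvec k -> R) : bconvex_fun F -> forall x eps, 0 < eps ->
  exists r, 0 < r /\ forall y, bdot (fun j => y j - x j) (fun j => y j - x j) < r ->
  Rabs (F y - F x) < eps.
Proof.
move=> hF x eps he.
case: (posnP k) => [k0|kpos].
  exists 1; split; first lra. move=> y _.
  have -> : F y = F x.
    apply: F_ext => j. exfalso. have := ltn_ord j. move: (nat_of_ord j) => jj. by rewrite k0.
  rewrite Rminus_diag Rabs_R0; lra.
have [M HM] := box_bound hF x kpos.
have HMx : F x <= M.
  have := HM (fun _ => 0) (ltac:(move=> j; rewrite Rabs_R0; lra)).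
  by rewrite (F_ext F (fun j => x j + 0) x (fun j => Rplus_0_r _)).
set del := Rmin 1 (eps / (2 * (M - F x + 1))).
have hd0 : 0 < del. apply: Rmin_pos; first lra. apply: Rdiv_lt_0_compat; lra.
have hd1 : del <= 1 by apply: Rmin_l.
have hd2 : del <= eps / (2 * (M - F x + 1)) by apply: Rmin_r.
exists (del * del); split; first nra.
move=> y hy. set d := fun j => y j - x j.
have hdj : forall j, - del <= d j <= del.
  move=> j. have := coord_le d j. rewrite /d in hy *. move=> hc.
  split; nra.
have Hz : forall sg, sg = 1 \/ sg = -1 -> forall j, Rabs (sg * d j / del) <= 1.
  move=> sg hsg j. have [h1 h2] := hdj j. apply: Rabs_le.
  case: hsg => ->; split; apply: (Rmult_le_reg_r del) => //; field_simplify; lra.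
have H1 : F y <= del * M + (1 - del) * F x.
  have := conv_app hF (fun j => x j + 1 * d j / del) x y del (conj (Rlt_le _ _ hd0) hd1).
  move=> H. have := HM _ (Hz 1 (or_introl erefl)).
  have : F y <= del * F (fun j => x j + 1 * d j / del) + (1 - del) * F x.
    apply: H => j. rewrite /d; field; lra.
  nra.
have H2 : F (fun j => x j - d j) <= del * M + (1 - del) * F x.
  have := conv_app hF (fun j => x j + -1 * d j / del) x (fun j => x j - d j) del (conj (Rlt_le _ _ hd0) hd1).
  move=> H. have := HM _ (Hz (-1) (or_intror erefl)).
  have : F (fun j => x j - d j) <= del * F (fun j => x j + -1 * d j / del) + (1 - del) * F x.
    apply: H => j. field; lra.
  nra.
have H3 : F x <= / 2 * F y + (1 - / 2) * F (fun j => x j - d j).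
  apply: conv_app => //; first lra. move=> j; rewrite /d; field.
have Hk : del * (M - F x) < eps.
  apply: Rle_lt_trans (_ : _ <= eps / (2 * (M - F x + 1)) * (M - F x)) _.
    apply: Rmult_le_compat_r; lra.
  set q := eps / (2 * (M - F x + 1)).
  have hq : q * (2 * (M - F x + 1)) = eps by rewrite /q; field; lra.
  have : 0 < q by rewrite /q; apply: Rdiv_lt_0_compat; lra.
  nra.
apply: Rabs_def1; lra.
Qed.
Arguments convex_cont {k F}.

Set Implicit Arguments. Unset Strict Implicit.

Lemma choice_dep (A : Type) (B : A -> Type) (P : forall a, B a -> Prop) :
  (forall a, exists b, P a b) -> exists f : (forall a, B a), forall a, P a (f a).
Proof.
move=> H. exists (fun a => proj1_sig (constructive_indefinite_description _ (H a))).
move=> a. exact: proj2_sig (constructive_indefinite_description _ (H a)).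
Qed.

Lemma choice_nd (A B : Type) (P : A -> B -> Prop) :
  (forall a, exists b, P a b) -> exists f : A -> B, forall a, P a (f a).
Proof. exact: (@choice_dep A (fun _ => B)). Qed.

Lemma incr_ge (phi : nat -> nat) : (forall i, (phi i < phi i.+1)%N) -> forall i, (i <= phi i)%N.
Proof. move=> h; elim => [|i IH] //. exact: leq_ltn_trans IH (h i). Qed.

Definition bsub k (x y : bvec k) : bvec k := fun j => x j - y j.
Arguments bsub {k}.
Definition bsq k (x : bvec k) := bdot x x.
Arguments bsq {k}.

Lemma bsq_ge0 k (x : bvec k) : 0 <= bsq x.
Proof. exact: bdot_ge0. Qed.

Lemma bsq_tri k (a b c : bvec k) : bsq (bsub a c) <= 2 * bsq (bsub a b) + 2 * bsq (bsub b c).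
Proof.
rewrite /bsq /bdot -!sumR_scale -sumR_split. apply: sumR_le => j. rewrite /bsub. move: (a j) (b j) (c j) => p q r; have := Rle_0_sqr (p - 2*q + r); rewrite /Rsqr; nra.
Qed.

Lemma bsq_sub0 k (a : bvec k) : bsq (bsub a (fun _ => 0)) = bsq a.
Proof. apply: eq_bigr => j _; rewrite /bsub; ring. Qed.

Lemma bsq_zero k (a b : bvec k) : bsq (bsub a b) = 0 -> a = b.
Proof.
move=> h. apply: functional_extensionality => j.
have := coord_le (bsub a b) j. rewrite -/(bsq _) h /bsub => hh.
have := Rle_0_sqr (a j - b j). rewrite /Rsqr => hh2. nra.
Qed.

Lemma compact_sq k (A : bvec k -> Prop) : bcompact A -> forall u, (forall i, A (u i)) ->
  exists phi x, (forall i, (phi i < phi i.+1)%N) /\ A x /\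
   forall eps, 0 < eps -> exists N, forall i, (N <= i)%N -> bsq (bsub (u (phi i)) x) < eps.
Proof.
move=> hA u hu. have [phi [x [h1 [h2 h3]]]] := hA u hu.
exists phi, x; split => //; split => // eps he.
have [N HN] := h3 (sqrt eps) (sqrt_lt_R0 _ he). exists N => i hi.
have := HN i hi. rewrite bnorm_lt; last exact: sqrt_lt_R0.
by rewrite sqrt_sqrt; last lra.
Qed.

Lemma compact_bounded k (A : bvec k -> Prop) : bcompact A -> exists B, 0 <= B /\ forall x, A x -> bsq x <= B.
Proof.
move=> hA. apply: NNPP => hn.
have H : forall i : nat, exists x, A x /\ INR i < bsq x.
  move=> i. apply: NNPP => hi. apply: hn. exists (Rabs (INR i)); split; first exact: Rabs_pos.
  move=> x hx. apply: Rnot_lt_le => hlt. apply: hi. exists x; split => //.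
  have := Rle_abs (INR i). lra.
have [u hu] := choice_nd H.
have [phi [x [h1 [h2 h3]]]] := compact_sq hA (fun i => proj1 (hu i)).
have [N HN] := h3 1 Rlt_0_1.
have [N' HN'] := INR_unbounded (2 + 2 * bsq x).
set i := maxn N N'.
have := HN i (leq_maxl _ _).
have := proj2 (hu (phi i)).
have := bsq_tri (u (phi i)) x (fun _ => 0). rewrite !bsq_sub0.
have : INR N' <= INR (phi i).
  apply: le_INR. apply/leP. apply: leq_trans (leq_maxr N N') (incr_ge h1 i).
lra.
Qed.

Lemma compact_closed k (A : bvec k -> Prop) : bcompact A -> forall x,
  (forall eps, 0 < eps -> exists y, A y /\ bsq (bsub y x) < eps) -> A x.
Proof.
move=> hA x hx.
have H : forall i : nat, exists y, A y /\ bsq (bsub y x) < / INR i.+1.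
  move=> i; apply: hx; apply: Rinv_0_lt_compat; apply: lt_0_INR; lia.
have [u hu] := choice_nd H.
have [phi [y [h1 [h2 h3]]]] := compact_sq hA (fun i => proj1 (hu i)).
suff -> : x = y by [].
apply: bsq_zero. apply: Rle_antisym; last exact: bsq_ge0.
apply: le_epsilon => e he. rewrite Rplus_0_l.
have [N HN] := h3 (e / 4) (ltac:(lra)).
have [N' HN'] := INR_unbounded (4 / e).
set i := maxn N N'.
have := HN i (leq_maxl _ _).
have := proj2 (hu (phi i)).
have := bsq_tri x (u (phi i)) y.
have Hs : bsq (bsub x (u (phi i))) = bsq (bsub (u (phi i)) x).
  apply: eq_bigr => j _; rewrite /bsub; ring.
rewrite Hs.
have : / INR (phi i).+1 < e / 4.
  have hp : INR N' <= INR (phi i) by apply: le_INR; apply/leP; apply: leq_trans (leq_maxr N N') (incr_ge h1 i).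
  have hp1 : 0 < INR (phi i).+1 by apply: lt_0_INR; lia.
  rewrite S_INR in hp1 *.
  apply: (Rmult_lt_reg_r (INR (phi i) + 1)) => //. rewrite Rinv_l; last lra.
  have : 4 / e * e = 4 by field; lra.
  nra.
lra.
Qed.

Lemma INR_inv_small (e : R) : 0 < e -> exists N : nat, forall i, (N <= i)%N -> / INR i.+1 < e.
Proof.
move=> he. have [N HN] := INR_unbounded (/ e). exists N => i hi.
have hp : INR N <= INR i by apply: le_INR; apply/leP.
have hp1 : 0 < INR i.+1 by apply: lt_0_INR; lia.
rewrite S_INR in hp1 *.
apply: (Rmult_lt_reg_r (INR i + 1)) => //. rewrite Rinv_l; last lra.
have : / e * e = 1 by field; lra.
have : 0 < / e by apply: Rinv_0_lt_compat.
nra.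
Qed.

Lemma extreme k (A : bvec k -> Prop) (F : bvec k -> R) : bcompact A -> (exists x, A x) ->
  (forall x, A x -> forall eps, 0 < eps -> exists r, 0 < r /\
     forall y, A y -> bsq (bsub y x) < r -> Rabs (F y - F x) < eps) ->
  exists x, A x /\ forall y, A y -> F x <= F y.
Proof.
move=> hA [x0 hx0] hF.
have [L HL] : exists L, forall y, A y -> L <= F y.
  apply: NNPP => hn.
  have H : forall i : nat, exists y, A y /\ F y < - INR i.
    move=> i; apply: NNPP => hi; apply: hn; exists (- INR i) => y hy.
    apply: Rnot_lt_le => hlt; apply: hi; exists y; split => //.
  have [u hu] := choice_nd H.
  have [phi [x [h1 [h2 h3]]]] := compact_sq hA (fun i => proj1 (hu i)).
  have [r [hr Hr]] := hF x h2 1 Rlt_0_1.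
  have [N HN] := h3 r hr.
  have [N' HN'] := INR_unbounded (1 - F x).
  set i := maxn N N'.
  have := Hr _ (proj1 (hu (phi i))) (HN i (leq_maxl _ _)).
  have := proj2 (hu (phi i)).
  have : INR N' <= INR (phi i).
    apply: le_INR. apply/leP. apply: leq_trans (leq_maxr N N') (incr_ge h1 i).
  move=> h4 h5 h6. have [h7 _] := Rabs_le_bt (Rlt_le _ _ h6). lra.
set E := fun r => exists y, A y /\ r = - F y.
have hEb : bound E.
  exists (- L) => r [y [hy ->]]. have := HL y hy. lra.
have hEn : exists r, E r by exists (- F x0), x0.
have [mm [Hub Hlub]] := completeness E hEb hEn.
have Hlow : forall y, A y -> - mm <= F y.
  move=> y hy. have := Hub (- F y) (ex_intro _ y (conj hy erefl)). lra.
have H : forall i : nat, exists y, A y /\ F y < - mm + / INR i.+1.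
  move=> i; apply: NNPP => hi.
  have hpos : 0 < / INR i.+1 by apply: Rinv_0_lt_compat; apply: lt_0_INR; lia.
  have : mm <= mm - / INR i.+1.
    apply: Hlub => r [y [hy ->]]. apply: Rnot_lt_le => hlt. apply: hi. exists y; split => //. lra.
  lra.
have [u hu] := choice_nd H.
have [phi [x [h1 [h2 h3]]]] := compact_sq hA (fun i => proj1 (hu i)).
exists x; split => // y hy.
apply: Rle_trans (Hlow y hy).
apply: le_epsilon => e he.
have [r [hr Hr]] := hF x h2 (e / 2) (ltac:(lra)).
have [N HN] := h3 r hr.
have [N' HN'] := INR_inv_small (ltac:(lra) : 0 < e / 2).
set i := maxn N N'.
have := Hr _ (proj1 (hu (phi i))) (HN i (leq_maxl _ _)).
have := proj2 (hu (phi i)).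
have := HN' (phi i) (leq_trans (leq_maxr N N') (incr_ge h1 i)).
move=> h4 h5 h6. have [h7 _] := Rabs_le_bt (Rlt_le _ _ h6). lra.
Qed.

Set Implicit Arguments. Unset Strict Implicit.

Lemma bdot_subl k (x y a : bvec k) : bdot (fun j => x j - y j) a = bdot x a - bdot y a.
Proof.
rewrite /bdot. have -> : forall u v : R, u - v = u + (-1) * v by move=> *; ring.
rewrite -sumR_scale -sumR_split. apply: eq_bigr => j _; ring.
Qed.

Lemma lin_cont k (a : bvec k) eps : 0 < eps -> exists r, 0 < r /\
  forall d : bvec k, bsq d < r -> Rabs (bdot d a) < eps.
Proof.
move=> he. have hA := bdot_ge0 a.
set l := 2 * (bdot a a + 1) / eps.
have hl : 0 < l by rewrite /l; apply: Rdiv_lt_0_compat; lra.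
exists (eps / (2 * l)); split; first by apply: Rdiv_lt_0_compat; lra.
move=> d hd. have hd0 := bdot_ge0 d.
have h1 := bdot_cs d a l hl.
have h2 := bdot_cs (fun j => - d j) a l hl.
have e1 : bdot (fun j => - d j) (fun j => - d j) = bdot d d by apply: eq_bigr => j _; ring.
have e2 : bdot (fun j => - d j) a = - bdot d a by rewrite (_ : - bdot d a = (-1) * bdot d a); last ring; rewrite /bdot -sumR_scale; apply: eq_bigr => j _; ring.
rewrite e1 e2 in h2.
have hq : l * (eps / (2 * l)) = eps / 2 by field; lra.
have hq2 : bdot a a / l < eps / 2.
  rewrite /l. apply: (Rmult_lt_reg_r (2 * (bdot a a + 1) / eps)); first by apply: Rdiv_lt_0_compat; lra.
  field_simplify; try lra. 
have : l * bdot d d <= l * (eps / (2 * l)) by apply: Rmult_le_compat_l; rewrite /bsq in hd; lra.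
move=> h3. apply: Rabs_def1; lra.
Qed.

Unset Implicit Arguments. Set Strict Implicit.



Lemma sumR_sub (N : nat) (F G : 'I_N -> R) :
  \big[Rplus/R0]_(i < N) (F i - G i) = \big[Rplus/R0]_(i < N) F i - \big[Rplus/R0]_(i < N) G i.
Proof.
rewrite (eq_bigr (fun i => F i + (-1) * G i)); last by move=> *; ring.
rewrite sumR_split sumR_scale; ring.
Qed.

Lemma sumR_opp (N : nat) (F : 'I_N -> R) :
  - (\big[Rplus/R0]_(i < N) F i) = \big[Rplus/R0]_(i < N) (- F i).
Proof.
rewrite [RHS](eq_bigr (fun i => (-1) * F i)); last by move=> *; ring.
rewrite sumR_scale; ring.
Qed.

Lemma iter_ordS (N : nat) k (a : 'I_N) : nat_of_ord (iter k (@ordS N) a) = (a + k) %% N.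
Proof.
elim: k => [|k IH] /=; first by rewrite addn0 modn_small.
by rewrite IH -addn1 modnDml addn1 addnS.
Qed.

Lemma all_blocks (N : nat) (a b : 'I_N) : exists k, (k < N)%N /\ iter k (@ordS N) a = b.
Proof.
have hN : (0 < N)%N by apply: leq_ltn_trans (ltn_ord a).
exists ((b + N - a) %% N); split; first by rewrite ltn_pmod.
apply: val_inj => /=. rewrite iter_ordS modnDmr subnKC; last by apply: leq_trans (ltnW (ltn_ord a)) (leq_addl _ _).
by rewrite modnDr modn_small.
Qed.

Section Main.
Variables (n : nat) (hn : (0 < n)%N) (m : 'I_n -> nat)
  (W : forall s : 'I_n, bvec (m s) -> Prop)
  (mu : vec n m -> R) (g : vec n m -> vec n m)
  (eta : forall s : 'I_n, bvec (m s) -> R)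
  (beta theta : R) (delta : nat -> R).

Hypotheses (HWne : forall s, exists x, W s x) (HWc : forall s, bconvex_set (W s))
  (HWk : forall s, bcompact (W s)) (Hmuc : vconvex_fun mu) (Hgrad : has_gradient mu g)
  (Hguc : vunif_cont_on (inW W) g) (Hetac : forall s, bconvex_fun (eta s))
  (Hbeta : 0 < beta < 1) (Htheta : 0 < theta < 1).

Let f := fobj mu eta.

Lemma V_exists w s : exists v, in_V W g eta w s v.
Proof.
have Hc : forall x, W s x -> forall eps, 0 < eps -> exists r, 0 < r /\
     forall y, W s y -> bsq (bsub y x) < r ->
     Rabs ((fun v => bdot v (g w s) + eta s v) y - (fun v => bdot v (g w s) + eta s v) x) < eps.
  move=> x hx eps he /=.
  have [r1 [hr1 H1]] := convex_cont (Hetac s) x (eps / 2) (ltac:(lra)).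
  have [r2 [hr2 H2]] := @lin_cont _ (g w s) (eps / 2) ltac:(lra).
  exists (Rmin r1 r2); split; first exact: Rmin_pos.
  move=> y hy hyx.
  have := H1 y (Rlt_le_trans _ _ _ hyx (Rmin_l _ _)).
  have := H2 _ (Rlt_le_trans _ _ _ hyx (Rmin_r _ _)).
  rewrite /bsub bdot_subl => ha hb.
  have := Rabs_triang (bdot y (g w s) - bdot x (g w s)) (eta s y - eta s x).
  have -> : bdot y (g w s) - bdot x (g w s) + (eta s y - eta s x) =
    bdot y (g w s) + eta s y - (bdot x (g w s) + eta s x) by ring.
  lra.
have [v [hv Hv]] := extreme (HWk s) (HWne s) Hc.
by exists v; split.
Qed.

Lemma gap_V w s v : in_V W g eta w s v -> is_max (W s) (gapfun g eta w s) (gapfun g eta w s v).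
Proof.
move=> [hv Hv]; split; first by exists v.
move=> u hu. have := Hv u hu. rewrite /gapfun !bdot_subl. lra.
Qed.

Lemma gap_V_eq w s v phi : in_V W g eta w s v -> is_max (W s) (gapfun g eta w s) phi ->
  gapfun g eta w s v = phi.
Proof.
move=> hV [[u [hu <-]] Hm]. have [_ H] := gap_V _ _ _ hV.
apply: Rle_antisym; [apply: Hm; exact: hV.1 | exact: H].
Qed.

Lemma W_bounded : exists B, 0 <= B /\ forall s x, W s x -> bsq x <= B.
Proof.
have [Bf HB] := @choice_dep 'I_n (fun _ => R) (fun s B => 0 <= B /\ forall x, W s x -> bsq x <= B)
  (fun s => compact_bounded (HWk s)).
exists (\big[Rplus/R0]_(s < n) Bf s); split.
  by apply: sumR_ge0 => s; case: (HB s).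
move=> s x hx. apply: Rle_trans (proj2 (HB s) x hx) _.
by apply: (@sumR_ge_term n Bf) => j; case: (HB j).
Qed.


Lemma vdot_single (x q : vec n m) s : (forall i, i <> s -> forall k, q i k = 0) ->
  vdot x q = bdot (x s) (q s).
Proof.
move=> h. rewrite /vdot (@sumR_single n (fun i => bdot (x i) (q i)) s) // => i hi.
rewrite /bdot big1 // => k _. rewrite h //; ring.
Qed.

Definition addv (w p : vec n m) (t : R) : vec n m := fun i k => w i k + t * p i k.

Lemma step_in_W w s v p t : inW W w -> W s v -> p s = (fun i => v i - w s i) ->
  (forall i, i <> s -> p i = fun _ => 0) -> 0 <= t <= 1 -> inW W (addv w p t).
Proof.
move=> hw hv hps hpo ht i. rewrite /addv.
case: (eqVneq i s) => [->|hne].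
- rewrite hps. have -> : (fun k => w s k + t * (v k - w s k)) = (fun k => t * v k + (1 - t) * w s k).
    by apply: functional_extensionality => k; ring.
  exact: HWc.
- rewrite hpo; last by move=> e; rewrite e eqxx in hne.
  have -> : (fun k => w i k + t * 0) = w i by apply: functional_extensionality => k; ring.
  exact: hw.
Qed.

Lemma eta_sum_step w s p t : (forall i, i <> s -> p i = fun _ => 0) ->
  \big[Rplus/R0]_(i < n) eta i (addv w p t i) =
  \big[Rplus/R0]_(i < n) eta i (w i) - eta s (w s) + eta s (addv w p t s).
Proof.
move=> hpo. rewrite (bigD1 s) //=.
rewrite (eq_bigr (fun i => eta i (w i))); last first.
  move=> i hi. f_equal. rewrite /addv hpo; last by move=> e; rewrite e eqxx in hi.
  by apply: functional_extensionality => k; ring.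
rewrite [in RHS](bigD1 s) //=. ring.
Qed.

Lemma descent_unif (del : R) : 0 < del -> exists ts, 0 < ts <= 1 /\
  forall w s v phi p t, inW W w -> in_V W g eta w s v -> is_max (W s) (gapfun g eta w s) phi ->
  del <= phi -> p s = (fun i => v i - w s i) -> (forall i, i <> s -> p i = fun _ => 0) ->
  0 < t <= ts -> f (addv w p t) <= f w - beta * t * phi.
Proof.
move=> hdel.
have [B [hB0 HB]] := W_bounded.
set P := 4 * B + 1.
have hP : 0 < P by rewrite /P; lra.
set c := (1 - beta) * del.
have hc : 0 < c by rewrite /c; nra.
set eps := Rmin 1 (c * c / P).
have heps : 0 < eps by apply: Rmin_pos; [lra| apply: Rdiv_lt_0_compat; nra].
have heps1 : eps <= 1 by apply: Rmin_l.
have heps2 : eps <= c * c / P by apply: Rmin_r.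
have [rho [hrho Hrho]] := Hguc eps heps.
have hsP := sqrt_pos P.
set ts := Rmin 1 (rho / (sqrt P + 1)).
have hts0 : 0 < ts by apply: Rmin_pos; [lra| apply: Rdiv_lt_0_compat; lra].
exists ts; split; first by split => //; apply: Rmin_l.
move=> w s v phi p t hw hV hmax hdp hps hpo ht.
have hts2 : ts <= rho / (sqrt P + 1) by apply: Rmin_r.
have hphi := gap_V_eq _ _ _ _ hV hmax.
set y := addv w p t.
have hts1 : ts <= 1 by apply: Rmin_l.
have hy : inW W y by apply: (step_in_W _ _ _ _ _ hw hV.1 hps hpo); lra.
have hpp : vdot p p <= 4 * B.
  rewrite (vdot_single p p s); last by move=> i hi k; rewrite hpo.
  rewrite hps. have := bsq_tri v (fun _ => 0) (w s).
  have -> : bsq (bsub (fun _ : 'I_(m s) => 0) (w s)) = bsq (w s) by apply: eq_bigr => k _; rewrite /bsub; ring.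
  rewrite bsq_sub0. have := HB s v hV.1. have := HB s (w s) (hw s). rewrite /bsq /bsub. lra.
have hdist : vnorm (vdiff y w) < rho.
  have -> : vnorm (vdiff y w) = vnorm (fun i k => t * p i k).
    rewrite /vnorm; f_equal; apply: vdot_ext => i k; rewrite /vdiff /y /addv; ring.
  rewrite vnorm_scale; last lra.
  have hvp : vnorm p <= sqrt P by apply: sqrt_le_1_alt; rewrite /P; lra.
  have hvp0 : 0 <= vnorm p by apply: sqrt_pos.
  have : t * vnorm p <= ts * sqrt P by apply: Rmult_le_compat; lra.
  have : ts * sqrt P <= rho / (sqrt P + 1) * sqrt P by apply: Rmult_le_compat_r.
  have : rho / (sqrt P + 1) * sqrt P < rho.
    have e : rho / (sqrt P + 1) * (sqrt P + 1) = rho by field; lra.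
    have : 0 < rho / (sqrt P + 1) by apply: Rdiv_lt_0_compat; lra.
    nra.
  lra.
have ha := Hrho w y hw hy hdist.
set a := vdiff (g y) (g w) in ha.
have haa : vdot a a <= c * c / P.
  have := (proj1 (vnorm_lt a eps heps)) ha. have := vdot_ge0 a. nra.
have hmu : mu y - mu w <= t * vdot (g y) p.
  have := grad_ineq Hmuc Hgrad y w.
  have -> : vdot (g y) (vdiff w y) = vdot (g y) (fun i k => (- t) * p i k).
    apply: vdot_ext => i k //. rewrite /vdiff /y /addv; ring.
  rewrite vdot_scale. lra.
have hsplit : vdot (g y) p = vdot (g w) p + vdot a p.
  rewrite (vdot_sym (g y)) (vdot_sym (g w)) (vdot_sym a).
  rewrite (vdot_ext p (g y) p (fun i k => 1 * g w i k + 1 * a i k)) //; last first.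
    by move=> i k; rewrite /a /vdiff; ring.
  rewrite vdot_lin; ring.
have hgw : vdot (g w) p = bdot (p s) (g w s).
  rewrite (vdot_single (g w) p s); last by move=> i hi k; rewrite hpo.
  exact: bdot_sym.
have hap : vdot a p <= c.
  have hl : 0 < P / c by apply: Rdiv_lt_0_compat.
  have := vdot_cs a p (P / c) hl.
  have h1 : P / c * vdot a a <= P / c * (c * c / P) by apply: Rmult_le_compat_l; lra.
  have e1 : P / c * (c * c / P) = c by field; lra.
  have h2 : vdot p p / (P / c) <= c.
    have e2 : vdot p p / (P / c) = vdot p p * c / P by field; lra.
    rewrite e2. apply: (Rmult_le_reg_r P) => //. rewrite /Rdiv Rmult_assoc Rinv_l; last lra.
    have : vdot p p * c <= 4 * B * c by apply: Rmult_le_compat_r; lra.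
    rewrite /P. nra.
  lra.
have hgap : bdot (p s) (g w s) = - phi + eta s (w s) - eta s v.
  rewrite -hphi /gapfun hps !bdot_subl. ring.
have heta : eta s (y s) <= t * eta s v + (1 - t) * eta s (w s).
  apply: conv_app; first exact: Hetac s.
    lra.
  move=> k. rewrite /y /addv hps. ring.
rewrite /f /fobj (eta_sum_step w s p t hpo) -/y.
have : t * (vdot (g w) p + vdot a p) <= t * (- phi + eta s (w s) - eta s v + c).
  apply: Rmult_le_compat_l; lra.
have : c <= (1 - beta) * phi by rewrite /c; apply: Rmult_le_compat_l; lra.
move=> h1 h2.
have : t * c <= t * ((1 - beta) * phi) by apply: Rmult_le_compat_l; lra.
move=> h3. rewrite hsplit in hmu. set S := \big[Rplus/R0]_(i < n) eta i (w i). nra.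
Qed.


Lemma min_nat (P : nat -> Prop) : (exists j, P j) -> exists j, P j /\ forall j', (j' < j)%N -> ~ P j'.
Proof.
move=> [j0 hj0]. apply: NNPP => hN.
suff : forall j, ~ P j by move=> /(_ j0).
move=> j. elim/lt_wf_ind: j => j IH hj. apply: hN. exists j; split => // j' hj'.
apply: IH. exact/ltP.
Qed.

Definition pvec (w : vec n m) (s : 'I_n) (v : bvec (m s)) : vec n m :=
  dfwith (fun i => fun _ : 'I_(m i) => 0) (fun k => v k - w s k).

Lemma pvec_s w s v : pvec w s v s = (fun k => v k - w s k).
Proof. by rewrite /pvec dfwith_in. Qed.

Lemma pvec_o w s v i : i <> s -> pvec w s v i = fun _ => 0.
Proof. move=> h. rewrite /pvec dfwith_out //. by apply/eqP => e; apply: h. Qed.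

Lemma theta_small e : 0 < e -> exists j, theta ^ j <= e.
Proof.
move=> he. have [N HN] := pow_lt_1_zero theta (ltac:(rewrite Rabs_right; lra)) e he.
exists N. have := HN N (le_n _). rewrite Rabs_right; [lra|]. apply: Rle_ge; apply: pow_le; lra.
Qed.

Lemma step_exists w s d l : inW W w -> 0 < delta l ->
  exists w' s' d' l', cpl_step hn W mu g eta beta theta delta w s d l w' s' d' l'.
Proof.
move=> hw hdl.
have [v hV] := V_exists w s.
have hmax := gap_V _ _ _ hV.
set phi := gapfun g eta w s v in hmax.
case: (Rle_lt_dec (delta l) phi) => hcase.
- set p := pvec w s v.
  have hps : p s = (fun k => v k - w s k) by apply: pvec_s.
  have hpo : forall i, i <> s -> p i = (fun _ => 0) by move=> i; apply: pvec_o.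
  have [ts [hts Hts]] := descent_unif (delta l) hdl.
  have [j0 hj0] := theta_small ts (proj1 hts).
  have [j [hj hmin]] := @min_nat (fun j => f (addv w p (theta ^ j)) <= f w - beta * theta ^ j * phi)
     (ex_intro _ j0 (Hts w s v phi p (theta ^ j0) hw hV hmax hcase hps hpo
        (conj (pow_lt _ _ (proj1 Htheta)) hj0))).
  exists (addv w p (theta ^ j)), (ordS s), 0%N, l.
  left. exists v, phi, p, j. do 5 (split => //).
  split; first exact: hj.
  split.
    move=> j' hj'. apply: Rnot_le_lt. exact: hmin j' hj'.
  done.
- case: (eqVneq d.+1 n) => [e|ne].
  + exists w, (Ordinal hn), 0%N, l.+1. right. exists phi; do 2 (split => //).
    left. by do 4 (split => //).
  + exists w, (ordS s), d.+1, l. right. exists phi; do 2 (split => //).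
    right. split; first by move=> e; rewrite e eqxx in ne. by do 3 (split => //).
Qed.


Lemma pow_theta_le1 j : 0 < theta ^ j <= 1.
Proof.
split; first by apply: pow_lt; lra.
elim: j => [|j IH] /=; first lra. have := pow_lt theta j (proj1 Htheta). nra.
Qed.

Lemma f_gap z w (c : 'I_n -> R) : (forall s, W s (w s)) ->
  (forall s u, W s u -> gapfun g eta z s u <= c s) ->
  f z - f w <= \big[Rplus/R0]_(s < n) c s.
Proof.
move=> hw hc.
have hg := grad_ineq Hmuc Hgrad z w.
have e : \big[Rplus/R0]_(s < n) eta s (z s) - \big[Rplus/R0]_(s < n) eta s (w s) - vdot (g z) (vdiff w z)
   = \big[Rplus/R0]_(s < n) gapfun g eta z s (w s).
  rewrite -sumR_sub /vdot -sumR_sub. apply: eq_bigr => s _.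
  rewrite /gapfun /vdiff bdot_subl (bdot_sym (g z s)) bdot_subl. ring.
have := @sumR_le n (fun s => gapfun g eta z s (w s)) c (fun s => hc s (w s) (hw s)).
rewrite /f /fobj. lra.
Qed.

Lemma f_lower : forall z, inW W z -> exists L, forall w, inW W w -> L <= f w.
Proof.
move=> z hz.
have [v hv] := @choice_dep 'I_n (fun s => bvec (m s)) (fun s v => in_V W g eta z s v) (V_exists z).
exists (f z - \big[Rplus/R0]_(s < n) gapfun g eta z s (v s)) => w hw.
have := f_gap z w (fun s => gapfun g eta z s (v s)) hw.
move=> H. have : f z - f w <= \big[Rplus/R0]_(s < n) gapfun g eta z s (v s).
  apply: H => s u hu. have [_ Hm] := gap_V _ _ _ (hv s). exact: Hm.
lra.
Qed.


Section Run.
Variables (ws : nat -> vec n m) (ss : nat -> 'I_n) (ds ls : nat -> nat) (z0 : vec n m).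
Hypotheses (Hz0 : inW W z0) (Hw0 : ws 0%N = z0) (Hd0 : ds 0%N = 0%N) (Hl0 : ls 0%N = 1%N)
  (Hstep : forall t, cpl_step hn W mu g eta beta theta delta
      (ws t) (ss t) (ds t) (ls t) (ws t.+1) (ss t.+1) (ds t.+1) (ls t.+1))
  (Hdpos : forall l, (1 <= l)%N -> 0 < delta l).

Lemma inv_basic t : inW W (ws t) /\ (1 <= ls t)%N /\ (ds t < n)%N.
Proof.
elim: t => [|t [hw [hl hd]]]; first by rewrite Hw0 Hl0 Hd0.
case: (Hstep t) => [[v [phi [p [j [hV [hmax [hdp [hps [hpo [harm [hfail [hw' [hs' [hd' hl']]]]]]]]]]]]]]
  | [phi [hmax [hlt [[hd1 [hw' [hs' [hd' hl']]]] | [hne [hw' [hs' [hd' hl']]]]]]]]].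
- rewrite hw' hl' hd'. split; last by split.
  apply: (step_in_W _ _ _ _ _ hw hV.1 hps hpo). have := pow_theta_le1 j. lra.
- by rewrite hw' hl' hd'; split.
- rewrite hw' hl' hd'; do 2 (split => //).
  by rewrite ltn_neqAle; apply/andP; split; [apply/eqP|].
Qed.

Definition gap_inv t := forall s', (exists i, (i < ds t)%N /\ iter i.+1 (@ordS n) s' = ss t) ->
  forall u, W s' u -> gapfun g eta (ws t) s' u < delta (ls t).

Lemma gap_inv_all t : gap_inv t.
Proof.
elim: t => [|t IH]; first by rewrite /gap_inv Hd0 => s' [i [hi _]].
case: (Hstep t) => [[v [phi [p [j [hV [hmax [hdp [hps [hpo [harm [hfail [hw' [hs' [hd' hl']]]]]]]]]]]]]]
  | [phi [hmax [hlt [[hd1 [hw' [hs' [hd' hl']]]] | [hne [hw' [hs' [hd' hl']]]]]]]]].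
- by rewrite /gap_inv hd' => s' [i [hi _]].
- by rewrite /gap_inv hd' => s' [i [hi _]].
- rewrite /gap_inv hd' hw' hl' hs' => s' [i [hi hit]].
  rewrite /= in hit. have hit' := ordS_inj hit. clear hit.
  case: i hi hit' => [|i] hi hit'.
  + rewrite /= in hit'. move=> u hu. rewrite -hit' in hmax.
    have := hmax.2 u hu. lra.
  + apply: IH. exists i; split => //.
Qed.

Lemma restart_gap t : ls t.+1 = (ls t).+1 -> forall s' u, W s' u -> gapfun g eta (ws t) s' u < delta (ls t).
Proof.
move=> hrest.
case: (Hstep t) => [[v [phi [p [j [hV [hmax [hdp [hps [hpo [harm [hfail [hw' [hs' [hd' hl']]]]]]]]]]]]]]
  | [phi [hmax [hlt [[hd1 [hw' [hs' [hd' hl']]]] | [hne [hw' [hs' [hd' hl']]]]]]]]].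
- by rewrite hl' in hrest; have := n_Sn (ls t).
- move=> s'. have [k [hk hit]] := all_blocks n s' (ss t).
  case: k hk hit => [|i] hk hit.
  + rewrite /= in hit. move=> u hu. rewrite -hit in hmax. have := hmax.2 u hu. lra.
  + apply: (gap_inv_all t). exists i; split => //. by rewrite -ltnS hd1.
- by rewrite hl' in hrest; have := n_Sn (ls t).
Qed.

Lemma ls_step t : ls t.+1 = ls t \/ ls t.+1 = (ls t).+1.
Proof.
case: (Hstep t) => [[v [phi [p [j [hV [hmax [hdp [hps [hpo [harm [hfail [hw' [hs' [hd' hl']]]]]]]]]]]]]]
  | [phi [hmax [hlt [[hd1 [hw' [hs' [hd' hl']]]] | [hne [hw' [hs' [hd' hl']]]]]]]]]; by [left|right].
Qed.

Lemma step_progress t ts : 0 < ts <= 1 ->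
  (forall w s v phi p tt, inW W w -> in_V W g eta w s v -> is_max (W s) (gapfun g eta w s) phi ->
    delta (ls t) <= phi -> p s = (fun i => v i - w s i) -> (forall i, i <> s -> p i = fun _ => 0) ->
    0 < tt <= ts -> f (addv w p tt) <= f w - beta * tt * phi) ->
  (f (ws t.+1) <= f (ws t) - beta * theta * ts * delta (ls t) /\ ls t.+1 = ls t)
  \/ ls t.+1 = (ls t).+1
  \/ (ws t.+1 = ws t /\ ds t.+1 = (ds t).+1 /\ ls t.+1 = ls t).
Proof.
move=> hts Hts. have [hw [hl hd]] := inv_basic t.
have hdl := Hdpos _ hl.
case: (Hstep t) => [[v [phi [p [j [hV [hmax [hdp [hps [hpo [harm [hfail [hw' [hs' [hd' hl']]]]]]]]]]]]]]
  | [phi [hmax [hlt [[hd1 [hw' [hs' [hd' hl']]]] | [hne [hw' [hs' [hd' hl']]]]]]]]].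
- left. split => //. rewrite hw'.
  have hth : theta * ts <= theta ^ j.
    clear hw'. case: j harm hfail => [|j] harm hfail.
    + rewrite /=. nra.
    + have hj' : ts < theta ^ j.
        apply: Rnot_le_lt => hle.
        have := hfail j (ltnSn j).
        have := Hts (ws t) (ss t) v phi p (theta ^ j) hw hV hmax hdp hps hpo (conj (proj1 (pow_theta_le1 j)) hle).
        rewrite /f /addv. lra.
      rewrite /=. nra.
  have : beta * theta * ts * delta (ls t) <= beta * theta ^ j * phi.
    have := pow_theta_le1 j. 
    have h1 : theta * ts * delta (ls t) <= theta ^ j * phi.
      apply: Rmult_le_compat => //; try nra.
    nra.
  move: harm. rewrite /f. lra.
- by right; left.
- by right; right.
Qed.

Lemma restart_exists t0 : exists t, (t0 <= t)%N /\ ls t = ls t0 /\ ls t.+1 = (ls t0).+1.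
Proof.
apply: NNPP => H.
set L := ls t0.
have stay : forall k, ls (t0 + k) = L.
  elim => [|k IH]; first by rewrite addn0.
  case: (ls_step (t0 + k)) => h; first by rewrite addnS h IH.
  exfalso; apply: H. exists (t0 + k)%N; split; first exact: leq_addr.
  by rewrite IH h IH.
have stay' : forall t, (t0 <= t)%N -> ls t = L.
  move=> t ht. rewrite -(subnKC ht). exact: stay.
have hL : (1 <= L)%N by have := inv_basic t0; case=> _ [].
have hdl := Hdpos _ hL.
have [ts [hts Hts]] := descent_unif (delta L) hdl.
set c := beta * theta * ts * delta L.
have hc : 0 < c.
  rewrite /c. have := Htheta; have := Hbeta; move: hts => [h1 h2] [h3 h4] [h5 h6].
  apply: Rmult_lt_0_compat => //. apply: Rmult_lt_0_compat => //. nra.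
have prog : forall t k, (t0 <= t)%N ->
   (exists t', (t < t')%N /\ f (ws t') <= f (ws t) - c) \/ (ds (t + k) = (ds t + k)%N /\ ws (t + k) = ws t).
  move=> t k ht. elim: k => [|k IH]; first by right; rewrite !addn0.
  case: IH => [hl|[hd hw]]; first by left.
  have hlk : ls (t + k) = L by apply: stay'; apply: leq_trans ht (leq_addr _ _).
  have Hts' : forall w s v phi p t', inW W w -> in_V W g eta w s v -> is_max (W s) (gapfun g eta w s) phi ->
    delta (ls (t + k)) <= phi -> p s = (fun i => v i - w s i) -> (forall i, i <> s -> p i = fun _ => 0) ->
    0 < t' <= ts -> f (addv w p t') <= f w - beta * t' * phi by rewrite hlk.
  case: (step_progress (t + k) ts hts Hts') => [[hf _]|[hr|[hw' [hd' _]]]].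
  + left. exists (t + k)%N.+1; split; first by rewrite ltnS leq_addr.
    rewrite -hw. rewrite hlk in hf. exact: hf.
  + exfalso. have := stay' (t + k).+1 (leq_trans ht (leq_trans (leq_addr k t) (leqnSn _))).
    rewrite hr hlk. move=> e; exact: n_Sn _ (esym e).
  + right. by rewrite addnS hd' hd hw' hw addnS.
have prog' : forall t, (t0 <= t)%N -> exists t', (t < t')%N /\ f (ws t') <= f (ws t) - c.
  move=> t ht. case: (prog t n ht) => // [[hd _]].
  have := (inv_basic (t + n)).2.2. by rewrite hd ltnNge leq_addl.
have big : forall K : nat, exists t, (t0 <= t)%N /\ f (ws t) <= f (ws t0) - INR K * c.
  elim => [|K [t [ht hf]]]; first by exists t0; split => //=; lra.
  have [t' [ht' hf']] := prog' t ht. exists t'; split; first exact: leq_trans ht (ltnW ht').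
  rewrite S_INR. lra.
have [L0 HL0] := f_lower z0 Hz0.
have [K HK] := INR_unbounded ((f (ws t0) - L0) / c).
have [t [_ hf]] := big K.
have := HL0 _ (inv_basic t).1.
have : (f (ws t0) - L0) / c * c = f (ws t0) - L0 by field; lra.
have : (f (ws t0) - L0) / c * c < INR K * c by apply: Rmult_lt_compat_r.
lra.
Qed.

Lemma outer_finite l : (1 <= l)%N -> exists t, ls t = l /\ ls t.+1 = l.+1.
Proof.
elim: l => [//|l IH] hl.
case: (posnP l) => [l0|lpos].
  rewrite l0. have [t [_ [h1 h2]]] := restart_exists 0. rewrite Hl0 in h1 h2. by exists t.
have [t [h1 h2]] := IH lpos.
have [t' [_ [h3 h4]]] := restart_exists t.+1. rewrite h2 in h3 h4. by exists t'.
Qed.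

End Run.


Lemma incr_mono (phi : nat -> nat) : (forall i, (phi i < phi i.+1)%N) -> forall a b, (a < b)%N -> (phi a < phi b)%N.
Proof.
move=> h a b hab. elim: b hab => [//|b IH] hab.
case: (ltngtP a b) => hb.
- exact: ltn_trans (IH hb) (h b).
- by rewrite ltnS leqNgt hb in hab.
- by rewrite hb.
Qed.

Lemma prod_cluster (z : nat -> vec n m) : (forall l, inW W (z l)) -> exists zb, cluster_point z zb.
Proof.
move=> hz.
have P : forall k, (k <= n)%N -> exists phi : nat -> nat, (forall i, (phi i < phi i.+1)%N) /\
  forall s : 'I_n, (s < k)%N -> exists xs : bvec (m s), forall eps, 0 < eps ->
    exists N, forall i, (N <= i)%N -> bsq (bsub (z (phi i) s) xs) < eps.
  elim => [|k IH] hk.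
    exists id; split => // s; by rewrite ltn0.
  have [phi [hphi Hphi]] := IH (ltnW hk).
  set sk := Ordinal hk.
  have [psi [y [hpsi [_ Hy]]]] := compact_sq (HWk sk) (fun i => hz (phi i) sk).
  exists (fun i => phi (psi i)); split.
    move=> i. apply: (incr_mono phi hphi). exact: hpsi.
  move=> s hs. rewrite ltnS leq_eqVlt in hs. case/orP: hs => hs.
  + have e : s = sk by apply: val_inj; apply/eqP.
    rewrite e. by exists y.
  + have [xs Hxs] := Hphi s hs. exists xs => eps he.
    have [N HN] := Hxs eps he. exists N => i hi. apply: HN.
    exact: leq_trans hi (incr_ge hpsi i).
have [phi [hphi Hphi]] := P n (leqnn n).
have [zb Hzb] := @choice_dep 'I_n (fun s => bvec (m s))
  (fun s xs => forall eps, 0 < eps -> exists N, forall i, (N <= i)%N -> bsq (bsub (z (phi i) s) xs) < eps)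
  (fun s => Hphi s (ltn_ord s)).
exists zb => eps he N.
set e2 := eps * eps / (INR n + 1).
have hn0 : 0 <= INR n by apply: pos_INR.
have he2 : 0 < e2 by rewrite /e2; apply: Rdiv_lt_0_compat; nra.
have [Ns HNs] := @choice_nd 'I_n nat (fun s N => forall i, (N <= i)%N -> bsq (bsub (z (phi i) s) (zb s)) < e2)
  (fun s => Hzb s e2 he2).
set i := maxn N (\max_(s < n) Ns s).
exists (phi i); split.
  apply: leq_trans (leq_maxl N _) (incr_ge hphi i).
apply/vnorm_lt => //.
apply: Rle_lt_trans (_ : _ <= INR n * e2) _.
  apply: sumR_bound => s. apply: Rlt_le. apply: HNs.
  apply: leq_trans (leq_bigmax s) (leq_maxr _ _).
rewrite /e2. apply: (Rmult_lt_reg_r (INR n + 1)); first lra.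
have -> : INR n * (eps * eps / (INR n + 1)) * (INR n + 1) = INR n * (eps * eps) by field; lra.
nra.
Qed.

Lemma cluster_in_W (z : nat -> vec n m) zb : (forall l, inW W (z l)) -> cluster_point z zb -> inW W zb.
Proof.
move=> hz hc s. apply: compact_closed (HWk s) _ _ => eps he.
have [k [_ hk]] := hc (sqrt eps) (sqrt_lt_R0 _ he) 0%N.
exists (z k s); split; first exact: hz.
apply: Rle_lt_trans (block_le (vdiff (z k) zb) s) _.
have := (proj1 (vnorm_lt _ _ (sqrt_lt_R0 _ he))) hk. by rewrite sqrt_sqrt; lra.
Qed.


Lemma mu_lsc x eps : 0 < eps -> exists r, 0 < r /\ forall y, vnorm (vdiff y x) < r -> mu x - eps < mu y.
Proof.
move=> he.
have [d1 [hd1 Hd1]] := Hgrad x 1 Rlt_0_1.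
set A := vdot (g x) (g x).
have hA : 0 <= A by apply: vdot_ge0.
set l := eps / (8 * (A + 1)).
have hl : 0 < l by rewrite /l; apply: Rdiv_lt_0_compat; lra.
set r := Rmin (Rmin d1 (eps / 4)) (Rmin 1 (eps * l / 8)).
have hr : 0 < r.
  apply: Rmin_pos; apply: Rmin_pos; try lra. apply: Rdiv_lt_0_compat; nra.
have hr1 : r <= d1 by apply: Rle_trans (Rmin_l _ _) (Rmin_l _ _).
have hr2 : r <= eps / 4 by apply: Rle_trans (Rmin_l _ _) (Rmin_r _ _).
have hr3 : r <= 1 by apply: Rle_trans (Rmin_r _ _) (Rmin_l _ _).
have hr4 : r <= eps * l / 8 by apply: Rle_trans (Rmin_r _ _) (Rmin_r _ _).
exists r; split => // y hy.
set h := vdiff y x in hy.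
have hy' : mu y = mu (fun s j => x s j + h s j).
  f_equal. apply: functional_extensionality_dep => s; apply: functional_extensionality => j.
  rewrite /h /vdiff; ring.
have := Hd1 h (Rlt_le_trans _ _ _ hy hr1). rewrite -hy' => Habs.
have [Hl _] := Rabs_le_bt Habs.
have hH : vdot h h < r * r by apply/vnorm_lt.
have hvn : 0 <= vnorm h by apply: sqrt_pos.
have hcs := vdot_cs (fun s j => (-1) * g x s j) h l hl.
have e1 : vdot (fun s j => (-1) * g x s j) h = - vdot (g x) h.
  rewrite vdot_sym vdot_scale vdot_sym; ring.
have e2 : vdot (fun s j => (-1) * g x s j) (fun s j => (-1) * g x s j) = A.
  rewrite vdot_scale vdot_sym vdot_scale /A; ring.
rewrite e1 e2 in hcs.
have h3 : l * A < eps / 8.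
  rewrite /l. apply: (Rmult_lt_reg_r (8 * (A + 1))); first lra.
  have -> : eps / (8 * (A + 1)) * A * (8 * (A + 1)) = eps * A by field; lra.
  nra.
have h4 : vdot h h / l <= eps / 8.
  have : vdot h h <= r by nra.
  move=> h5. apply: (Rmult_le_reg_r l) => //.
  have -> : vdot h h / l * l = vdot h h by field; lra.
  lra.
lra.
Qed.

Lemma f_lsc x eps : 0 < eps -> exists r, 0 < r /\ forall y, vnorm (vdiff y x) < r -> f x - eps < f y.
Proof.
move=> he.
have [r1 [hr1 Hr1]] := mu_lsc x (eps / 2) (ltac:(lra)).
set e' := eps / (2 * (INR n + 1)).
have hn0 : 0 <= INR n by apply: pos_INR.
have he' : 0 < e' by rewrite /e'; apply: Rdiv_lt_0_compat; lra.
have [rs Hrs] := @choice_nd 'I_n R (fun s r => 0 < r /\ forall y, bdot (fun j => y j - x s j) (fun j => y j - x s j) < r ->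
     Rabs (eta s y - eta s (x s)) < e') (fun s => convex_cont (Hetac s) (x s) e' he').
set S := 1 + \big[Rplus/R0]_(s < n) / rs s.
have hS : forall s, / rs s <= S.
  move=> s. have := @sumR_ge_term n (fun s => / rs s) s (fun j => Rlt_le _ _ (Rinv_0_lt_compat _ (proj1 (Hrs j)))).
  rewrite /S. lra.
have hS0 : 0 < S by have := hS (Ordinal hn); have := Rinv_0_lt_compat _ (proj1 (Hrs (Ordinal hn))); lra.
set r2 := / S.
have hr2 : 0 < r2 by apply: Rinv_0_lt_compat.
have hr2s : forall s, r2 <= rs s.
  move=> s. have hs := proj1 (Hrs s). rewrite /r2 -(Rinv_inv (rs s)).
  apply: Rinv_le_contravar; [apply: Rinv_0_lt_compat => // | apply: hS].
set r := Rmin r1 (Rmin 1 r2).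
have hr : 0 < r by apply: Rmin_pos => //; apply: Rmin_pos; lra.
exists r; split => // y hy.
have := Hr1 y (Rlt_le_trans _ _ _ hy (Rmin_l _ _)) => hmu.
have hH : vdot (vdiff y x) (vdiff y x) < r * r by apply/vnorm_lt.
have hr' : r * r <= r2.
  have : r <= 1 by apply: Rle_trans (Rmin_r _ _) (Rmin_l _ _).
  have : r <= r2 by apply: Rle_trans (Rmin_r _ _) (Rmin_r _ _).
  nra.
have heta : forall s, eta s (x s) - eta s (y s) <= e'.
  move=> s. have hb := block_le (vdiff y x) s.
  have hlt : bdot (fun j => y s j - x s j) (fun j => y s j - x s j) < rs s.
    have := hr2s s. rewrite /vdiff in hb hH. move=> ?; lra.
  have := (proj2 (Hrs s)) (y s) hlt.
  move=> /Rlt_le /Rabs_le_bt [h1 h2]; lra.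
have := @sumR_bound n (fun s => eta s (x s) - eta s (y s)) e' heta.
rewrite sumR_sub => hsum.
have : INR n * e' < eps / 2.
  rewrite /e'. apply: (Rmult_lt_reg_r (2 * (INR n + 1))); first lra.
  have -> : INR n * (eps / (2 * (INR n + 1))) * (2 * (INR n + 1)) = INR n * eps by field; lra.
  nra.
rewrite /f /fobj. lra.
Qed.


Lemma main_all (z0 : vec n m) : inW W z0 ->
  (forall l, (1 <= l)%N -> 0 < delta l) -> Un_cv delta 0 ->
  (forall (w : vec n m) (s : 'I_n) (d l : nat), inW W w -> (1 <= l)%N ->
     exists w' s' d' l', cpl_step hn W mu g eta beta theta delta w s d l w' s' d' l') /\
  (forall (ws : nat -> vec n m) (ss : nat -> 'I_n) (ds ls : nat -> nat),
     ws 0%N = z0 -> ss 0%N = Ordinal hn -> ds 0%N = 0%N -> ls 0%N = 1%N ->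
     (forall t, cpl_step hn W mu g eta beta theta delta
                  (ws t) (ss t) (ds t) (ls t) (ws t.+1) (ss t.+1) (ds t.+1) (ls t.+1)) ->
     (forall l, (1 <= l)%N -> exists t, ls t = l /\ ls t.+1 = l.+1) /\
     (forall z : nat -> vec n m, z 0%N = z0 ->
        (forall t, ls t.+1 = (ls t).+1 -> z (ls t) = ws t) ->
        (exists zb, cluster_point z zb) /\
        (forall zb, cluster_point z zb ->
           inW W zb /\ forall w, inW W w -> fobj mu eta zb <= fobj mu eta w) /\
        (exists fstar, is_min (inW W) (fobj mu eta) fstar /\
                       Un_cv (fun l => fobj mu eta (z l)) fstar))).
Proof using All.
move=> Hz0 Hdpos Hdcv. split.
  move=> w s d l hw hl. exact: step_exists _ _ _ _ hw (Hdpos _ hl).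
move=> ws ss ds ls Hw0 Hs0 Hd0 Hl0 Hstep.
have Hfin := outer_finite ws ss ds ls z0 Hz0 Hw0 Hd0 Hl0 Hstep Hdpos.
split => // z Hz0' Hz.
have hn0 : 0 <= INR n by apply: pos_INR.
have zW : forall l, inW W (z l).
  case => [|l]; first by rewrite Hz0'.
  have [t [h1 h2]] := Hfin l.+1 (ltac:(done)).
  rewrite -h1 Hz; last by rewrite h1 h2.
  exact: (inv_basic ws ss ds ls z0 Hz0 Hw0 Hd0 Hl0 Hstep t).1.
have zgap : forall l, (1 <= l)%N -> forall w, inW W w -> f (z l) - f w <= INR n * delta l.
  move=> l hl w hw. have [t [h1 h2]] := Hfin l hl.
  have ezl : z l = ws t by rewrite -h1 Hz // h1 h2.
  apply: Rle_trans (_ : _ <= \big[Rplus/R0]_(s < n) delta l) _; last by apply: (@sumR_bound n (fun _ => delta l) (delta l)) => *; apply: Rle_refl.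
  apply: f_gap => // s' u hu. rewrite ezl -h1. apply: Rlt_le.
  apply: (restart_gap ws ss ds ls Hd0 Hstep t) => //. by rewrite h1 h2.
have Hopt : forall zb, cluster_point z zb -> inW W zb /\ forall w, inW W w -> f zb <= f w.
  move=> zb hzb. split; first exact: cluster_in_W zW hzb.
  move=> w hw. apply: le_epsilon => e he.
  have [r [hr Hr]] := f_lsc zb (e / 2) (ltac:(lra)).
  have [N HN] := Hdcv (e / (2 * (INR n + 1))) (ltac:(apply: Rdiv_lt_0_compat; lra)).
  have [k [hk hk2]] := hzb r hr (maxn N 1).
  have hk1 : (1 <= k)%N by apply: leq_trans (leq_maxr _ _) hk.
  have := Hr _ hk2. have := zgap k hk1 w hw.
  have := HN k (ltac:(apply/leP; exact: leq_trans (leq_maxl _ _) hk)).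
  rewrite /R_dist Rminus_0_r => /Rlt_le /Rabs_le_bt [_ hd].
  have : INR n * delta k <= INR n * (e / (2 * (INR n + 1))) by apply: Rmult_le_compat_l.
  have : INR n * (e / (2 * (INR n + 1))) <= e / 2.
    apply: (Rmult_le_reg_r (2 * (INR n + 1))); first lra.
    have -> : INR n * (e / (2 * (INR n + 1))) * (2 * (INR n + 1)) = INR n * e by field; lra.
    have -> : e / 2 * (2 * (INR n + 1)) = INR n * e + e by field.
    lra.
  rewrite /f. move=> *; lra.
have [zb hzb] := prod_cluster z zW.
split; first by exists zb.
split; first exact: Hopt.
have [hzbW Hzb] := Hopt zb hzb.
exists (f zb); split.
  split; first by exists zb.
  exact: Hzb.
move=> e he.
have [N HN] := Hdcv (e / (INR n + 1)) (ltac:(apply: Rdiv_lt_0_compat; lra)).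
exists (maxn N 1) => l /leP hl.
have hl1 : (1 <= l)%N by apply: leq_trans (leq_maxr _ _) hl.
have := HN l (ltac:(apply/leP; exact: leq_trans (leq_maxl _ _) hl)).
rewrite /R_dist Rminus_0_r => /Rlt_le /Rabs_le_bt [_ hd].
have h1 := zgap l hl1 zb hzbW.
have h2 := Hzb (z l) (zW l).
have : INR n * delta l <= INR n * (e / (INR n + 1)) by apply: Rmult_le_compat_l.
have : INR n * (e / (INR n + 1)) < e.
  apply: (Rmult_lt_reg_r (INR n + 1)); first lra.
  have -> : INR n * (e / (INR n + 1)) * (INR n + 1) = INR n * e by field; lra.
  nra.
move=> ha hb. rewrite Rabs_right; rewrite /f in h1 h2 *; lra.
Qed.

End Main.

Theorem proposition3p1 (n : nat) (hn : (0 < n)%N) (m : 'I_n -> nat)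
  (W : forall s : 'I_n, bvec (m s) -> Prop)
  (mu : vec n m -> R) (g : vec n m -> vec n m)
  (eta : forall s : 'I_n, bvec (m s) -> R)
  (z0 : vec n m) (beta theta : R) (delta : nat -> R) :
  (forall s, exists x, W s x) ->
  (forall s, bconvex_set (W s)) ->
  (forall s, bcompact (W s)) ->
  vconvex_fun mu -> has_gradient mu g -> vcontinuous g ->
  vunif_cont_on (inW W) g ->
  (forall s, bconvex_fun (eta s)) ->
  inW W z0 -> 0 < beta < 1 -> 0 < theta < 1 ->
  (forall l, (1 <= l)%N -> 0 < delta l) ->
  (forall l, (1 <= l)%N -> delta l.+1 <= delta l) ->
  Un_cv delta 0 ->
  (* the method can always be carried out (Step 1 and the line search of Step 4 succeed) *)
  (forall (w : vec n m) (s : 'I_n) (d l : nat), inW W w -> (1 <= l)%N ->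
     exists w' s' d' l', cpl_step hn W mu g eta beta theta delta w s d l w' s' d' l') /\
  (* every run of the method *)
  (forall (ws : nat -> vec n m) (ss : nat -> 'I_n) (ds ls : nat -> nat),
     ws 0%N = z0 -> ss 0%N = Ordinal hn -> ds 0%N = 0%N -> ls 0%N = 1%N ->
     (forall t, cpl_step hn W mu g eta beta theta delta
                  (ws t) (ss t) (ds t) (ls t) (ws t.+1) (ss t.+1) (ds t.+1) (ls t.+1)) ->
     (* (i) every outer iteration l ends with a restart after finitely many steps *)
     (forall l, (1 <= l)%N -> exists t, ls t = l /\ ls t.+1 = l.+1) /\
     (* (ii) properties of the restart points z^l *)
     (forall z : nat -> vec n m, z 0%N = z0 ->
        (forall t, ls t.+1 = (ls t).+1 -> z (ls t) = ws t) ->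
        (exists zb, cluster_point z zb) /\
        (forall zb, cluster_point z zb ->
           inW W zb /\ forall w, inW W w -> fobj mu eta zb <= fobj mu eta w) /\
        (exists fstar, is_min (inW W) (fobj mu eta) fstar /\
                       Un_cv (fun l => fobj mu eta (z l)) fstar))).
Proof.
move=> HWne HWc HWk Hmuc Hgrad Hgc Hguc Hetac Hz0 Hbeta Htheta Hdpos Hdmono Hdcv.
exact: (main_all n hn m W mu g eta beta theta delta HWne HWc HWk Hmuc Hgrad Hguc Hetac Hbeta Htheta z0 Hz0 Hdpos Hdcv).
Qed.
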